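(* Let $p$ be a prime and let $L$ be a locally compact abelian group of exponent $p$ (every non-identity element has order $p$). If $\nabla$ is a symplectic self-duality of $L$, then $(L,\nabla)$ is standard.
   Context: $\mathbf T=\mathbf R/\mathbf Z$; $\hat L$ is the Pontryagin dual of $L$ (continuous homomorphisms $L\to\mathbf T$, compact-open topology). A symplectic self-duality of $L$ is an isomorphism of topological groups $\nabla:L\to\hat L$ with $\nabla(x)(x)=0$ for all $x\in L$. For an LCA group $A$, the standard symplectic self-duality of $A\times\hat A$ is $\nabla^0(x,\chi)(y,\lambda)=\chi(y)-\lambda(x)$. $(L,\nabla)$ is standard if there exist an LCA group $A$ and an isomorphism of topological groups $\phi:A\times\hat A\to L$ with $\nabla(\phi(u))(\phi(v))=\nabla^0(u)(v)$ for all $u,v\in A\times\hat A$. *)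

(* Defs.v *)
From HB Require Import structures.
From mathcomp Require Import all_boot all_order all_algebra.
From mathcomp Require Import all_classical all_reals all_analysis.
From mathcomp Require Import Rstruct Rstruct_topology generic_quotient.
Set Implicit Arguments. Unset Strict Implicit. Unset Printing Implicit Defensive.
Import Order.TTheory GRing.Theory Num.Theory.
Local Open Scope classical_set_scope.
Local Open Scope ring_scope.

Definition circ_r (x y : Rdefinitions.R) : bool := (x - y) \is a Num.int.

Lemma circ_r_refl : reflexive circ_r.
Proof. by move=> x; rewrite /circ_r subrr rpred0. Qed.
Lemma circ_r_sym : symmetric circ_r.
Proof. by move=> x y; rewrite /circ_r -opprB rpredN. Qed.
Lemma circ_r_trans : transitive circ_r.
Proof.
move=> y x z hxy hyz; rewrite /circ_r.
have -> : x - z = (x - y) + (y - z) by rewrite addrA subrK.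
exact: rpredD.
Qed.

Canonical circ_equiv := EquivRel circ_r circ_r_refl circ_r_sym circ_r_trans.

Local Open Scope quotient_scope.
Definition circ_quot := {eq_quot circ_equiv}.
Definition T : topologicalType := quotient_topology circ_quot.

Definition piT (x : Rdefinitions.R) : T := \pi_circ_quot x.
Definition addT (a b : T) : T := piT (repr a + repr b).
Definition oppT (a : T) : T := piT (- repr a).
Definition subT (a b : T) : T := addT a (oppT b).
Definition zeroT : T := piT 0.

Definition LCA (L : topologicalZmodType) : Prop :=
  hausdorff_space L /\ locally_compact [set: L].

Definition is_char (L : topologicalZmodType) (f : L -> T) : Prop :=
  continuous f /\ forall x y : L, f (x + y) = addT (f x) (f y).

Definition chars (L : topologicalZmodType) : set {compact-open, L -> T} :=
  [set f | is_char f].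

(* \hat L : the characters, with the subspace topology of the compact-open
   topology on L -> T; its group law is pointwise addition in T. *)
Definition dual (L : topologicalZmodType) : topologicalType :=
  set_type (@chars L).

Definition dual_val (L : topologicalZmodType) (chi : dual L) : L -> T :=
  set_val chi.

Definition homeomorphism (X Y : topologicalType) (f : X -> Y) : Prop :=
  continuous f /\
  exists g : Y -> X, [/\ cancel f g, cancel g f & continuous g].

Definition symplectic_self_duality (L : topologicalZmodType)
    (nabla : L -> dual L) : Prop :=
  [/\ homeomorphism nabla,
      (forall x y z : L,
          dual_val (nabla (x + y)) z =
          addT (dual_val (nabla x) z) (dual_val (nabla y) z))
    & forall x : L, dual_val (nabla x) x = zeroT].

Definition std_nabla (A : topologicalZmodType) (u v : A * dual A) : T :=
  subT (dual_val u.2 v.1) (dual_val v.2 u.1).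

Definition is_standard (L : topologicalZmodType) (nabla : L -> dual L) : Prop :=
  exists (A : topologicalZmodType) (phi : (A * dual A)%type -> L),
    [/\ LCA A,
        homeomorphism phi,
        (* phi is a group homomorphism, A x \hat A carrying the
           componentwise law (pointwise addition on \hat A) *)
        (forall u v w : (A * dual A)%type,
            w.1 = u.1 + v.1 ->
            (forall a : A, dual_val w.2 a = addT (dual_val u.2 a) (dual_val v.2 a)) ->
            phi w = phi u + phi v)
      & forall u v : (A * dual A)%type,
          dual_val (nabla (phi u)) (phi v) = std_nabla u v].

(* Main.v *)
Require Import Defs.
From HB Require Import structures.
From mathcomp Require Import all_boot all_order all_algebra.
From mathcomp Require Import all_classical all_reals all_analysis.
From mathcomp Require Import Rstruct Rstruct_topology generic_quotient.
From mathcomp Require Import ring lra.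
Set Implicit Arguments. Unset Strict Implicit. Unset Printing Implicit Defensive.
Import Order.TTheory GRing.Theory Num.Theory.
Local Open Scope classical_set_scope.
Local Open Scope ring_scope.
Section TQ.
Local Open Scope quotient_scope.
Lemma piT_eq (x y : Rdefinitions.R) : piT x = piT y <-> (x - y) \is a Num.int.
Proof.
split => [h|h].
  have /eqmodP : x = y %[mod circ_quot] by exact: h.
  done.
by apply/eqmodP.
Qed.

Lemma reprT (t : T) : piT (repr t) = t.
Proof. exact: reprK. Qed.

Lemma piTD x y : piT (x + y) = addT (piT x) (piT y).
Proof.
rewrite /addT; apply/piT_eq.
have h1 : (repr (piT x) - x) \is a Num.int by apply/piT_eq; rewrite reprT.
have h2 : (repr (piT y) - y) \is a Num.int by apply/piT_eq; rewrite reprT.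
have -> : x + y - (repr (piT x) + repr (piT y)) =
   - ((repr (piT x) - x) + (repr (piT y) - y)) by ring.
by rewrite rpredN rpredD.
Qed.

Lemma piTN x : piT (- x) = oppT (piT x).
Proof.
rewrite /oppT; apply/piT_eq.
have h1 : (repr (piT x) - x) \is a Num.int by apply/piT_eq; rewrite reprT.
have -> : - x - - repr (piT x) = (repr (piT x) - x) by ring.
done.
Qed.

Lemma T_ex (t : T) : exists r, t = piT r.
Proof. by exists (repr t); rewrite reprT. Qed.

Lemma addTC a b : addT a b = addT b a.
Proof. by case: (T_ex a) => x ->; case: (T_ex b) => y ->; rewrite -!piTD addrC. Qed.

Lemma addTA a b c : addT a (addT b c) = addT (addT a b) c.
Proof.
case: (T_ex a) => x ->; case: (T_ex b) => y ->; case: (T_ex c) => z ->.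
by rewrite -!piTD addrA.
Qed.

Lemma add0T a : addT zeroT a = a.
Proof. by case: (T_ex a) => x ->; rewrite /zeroT -piTD add0r. Qed.

Lemma addT0 a : addT a zeroT = a.
Proof. by rewrite addTC add0T. Qed.

Lemma addNT a : addT (oppT a) a = zeroT.
Proof. by case: (T_ex a) => x ->; rewrite -piTN -piTD addNr. Qed.

Lemma addTN a : addT a (oppT a) = zeroT.
Proof. by rewrite addTC addNT. Qed.

Lemma addTI a b c : addT a b = addT a c -> b = c.
Proof.
move=> h.
by rewrite -[b]add0T -(addNT a) -addTA h addTA addNT add0T.
Qed.

Lemma addT_eq0 a b : addT a b = zeroT -> b = oppT a.
Proof. by move=> h; apply: (@addTI a); rewrite h addTN. Qed.

Lemma subTT a : subT a a = zeroT.
Proof. exact: addTN. Qed.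

Lemma oppT0 : oppT zeroT = zeroT.
Proof. by rewrite /zeroT -piTN oppr0. Qed.

Lemma oppTK a : oppT (oppT a) = a.
Proof. by case: (T_ex a) => x ->; rewrite -!piTN opprK. Qed.

Lemma oppTD a b : oppT (addT a b) = addT (oppT a) (oppT b).
Proof.
by case: (T_ex a) => x ->; case: (T_ex b) => y ->; rewrite -piTD -!piTN -piTD opprD.
Qed.
End TQ.

Section Alg.
Variable V : zmodType.

Definition subg (S : set V) := S 0 /\ forall x y, S x -> S y -> S (x - y).

Lemma subgN S x : subg S -> S x -> S (- x).
Proof. by case=> h0 hB Sx; rewrite -sub0r; apply: hB. Qed.

Lemma subgD S x y : subg S -> S x -> S y -> S (x + y).
Proof.
move=> hS Sx Sy; rewrite -[y]opprK; apply: hS.2 => //; exact: subgN.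
Qed.

Lemma subgMn S x n : subg S -> S x -> S (x *+ n).
Proof.
move=> hS Sx; elim: n => [|n IH]; first by rewrite mulr0n; case: hS.
by rewrite mulrS; apply: subgD.
Qed.

Lemma subgMz S x k : subg S -> S x -> S (x *~ k).
Proof.
move=> hS Sx; case: k => n.
  by rewrite -pmulrn; apply: subgMn.
by rewrite NegzE mulrNz; apply: subgN => //; rewrite -pmulrn; apply: subgMn.
Qed.

Definition gspan (S : set V) (x : V) :=
  [set z | exists s k, S s /\ z = s + x *~ k].

Lemma subg_gspan S x : subg S -> subg (gspan S x).
Proof.
move=> hS; split; first by exists 0, 0; split; [case: hS|rewrite mulr0z addr0].
move=> _ _ [s [k [Ss ->]]] [t [l [St ->]]].
exists (s - t), (k - l); split; first by apply: hS.2.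
by rewrite mulrzBr; rewrite opprD addrACA.
Qed.

Lemma gspan_sub S x : S `<=` gspan S x.
Proof. by move=> s Ss; exists s, 0; rewrite mulr0z addr0. Qed.

Lemma gspan_x S x : subg S -> gspan S x x.
Proof. by move=> hS; exists 0, 1; split; [case: hS|rewrite mulr1z add0r]. Qed.

Lemma gspan_min S Z x : subg Z -> S `<=` Z -> Z x -> gspan S x `<=` Z.
Proof.
move=> hZ SZ Zx _ [s [k [Ss ->]]]; apply: subgD => //; first exact: SZ.
exact: subgMz.
Qed.

Definition ssum (B M : set V) := [set z | exists b m, B b /\ M m /\ z = b + m].

Lemma subg_ssum B M : subg B -> subg M -> subg (ssum B M).
Proof.
move=> hB hM; split; first by exists 0, 0; rewrite addr0; case: hB; case: hM.
move=> _ _ [b [m [Bb [Mm ->]]]] [b' [m' [Bb' [Mm' ->]]]].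
exists (b - b'), (m - m'); split; first exact: hB.2.
split; first exact: hM.2.
by rewrite opprD addrACA.
Qed.

Lemma ssum_l B M b : subg M -> B b -> ssum B M b.
Proof. by move=> hM Bb; exists b, 0; rewrite addr0; case: hM. Qed.

Lemma ssum_r B M m : subg B -> M m -> ssum B M m.
Proof. by move=> hB Mm; exists 0, m; rewrite add0r; case: hB. Qed.

Lemma zorn0 (P : set (set V)) (S0 : set V) :
  S0 0 -> P S0 ->
  (forall F : set (set V), F !=set0 -> F `<=` P -> total_on F subset ->
      P (\bigcup_(X in F) X)) ->
  exists A, P A /\ forall B, A `<` B -> ~ P B.
Proof.
move=> S00 PS0 hch.
pose P' := fun X : set V => X = set0 \/ P X.
have [A [PA Amax]] : exists A, P' A /\ forall B, A `<` B -> ~ P' B.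
  apply: Zorn_bigcup => F FP tot.
  have [F0|F1] := pselect (exists X, F X /\ X !=set0).
    right.
    have -> : \bigcup_(X in F) X = \bigcup_(X in [set X | F X /\ X !=set0]) X.
      apply/seteqP; split => x [X FX Xx].
        by exists X => //; split => //; exists x.
      by exists X => //; case: FX.
    apply: hch.
    - by case: F0 => X hX; exists X.
    - move=> X [FX [x Xx]]; case: (FP X FX) => // X0.
      by rewrite X0 in Xx.
    - by move=> X Y [FX _] [FY _]; apply: tot.
  left; apply/seteqP; split => x // [X FX Xx]; exfalso; apply: F1.
  by exists X; split => //; exists x.
exists A; split.
  case: PA => // A0; exfalso; apply: (Amax S0); last by right.
  rewrite A0; split => //; move=> h; have := h 0 S00; done.
by move=> B AB PB; apply: (Amax B AB); right.
Qed.

End Alg.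

Section Exp.
Variables (V : zmodType) (p : nat).
Hypothesis pp : prime p.
Hypothesis hexp : forall x : V, x *+ p = 0.

Lemma mulz_p (x : V) t : x *~ (p%:Z * t) = 0.
Proof. by rewrite mulrzA -pmulrn hexp mul0rz. Qed.

Lemma inv_mul (S : set V) x k : subg S -> S (x *~ k) -> ~~ (p%:Z %| k)%Z -> S x.
Proof.
move=> hS Sxk ndk.
have [u [v huv]] := Bezoutz k p%:Z.
have g1 : gcdz k p%:Z = 1.
  apply/eqP; rewrite -/(coprimez k p%:Z) coprimezE /= coprime_sym prime_coprime //.
have -> : x = x *~ k *~ u + x *~ (p%:Z * v).
  by rewrite -[LHS]mulr1z -g1 -huv mulrzDr (mulrC v) mulrzA_C.
rewrite mulz_p addr0; exact: subgMz.
Qed.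

Lemma gspan_disj (C H : set V) x :
  subg C -> subg H -> (forall y, C y -> H y -> y = 0) -> ~ ssum H C x ->
  forall y, gspan C x y -> H y -> y = 0.
Proof.
move=> hC hH disj nx _ [c [k [Cc ->]]] Hy.
have [dk|ndk] := boolP (p%:Z %| k)%Z.
  case/dvdzP: dk => t kE; rewrite kE (mulrC t) mulz_p addr0 in Hy *.
  exact: disj.
exfalso; apply: nx; apply: (@inv_mul _ x k) => //; first exact: subg_ssum.
exists (c + x *~ k), (- c); split => //; split; first exact: subgN.
by rewrite addrC addKr.
Qed.

Lemma complement (H : set V) : subg H ->
  exists C, subg C /\ (forall y, C y -> H y -> y = 0) /\
            forall x, ssum H C x.
Proof.
move=> hH.
pose P := fun C : set V => subg C /\ (forall y, C y -> H y -> y = 0).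
have [|||C [[hC disj] Cmax]] := @zorn0 _ P [set 0].
- done.
- split; first split => //; first by move=> x y -> ->; rewrite subr0.
  by move=> y ->.
- move=> F [X0 FX0] FP tot; split; first split.
  + by exists X0 => //; have [[]] := FP X0 FX0.
  + move=> x y [X FX Xx] [Y FY Yy].
    case: (tot X Y FX FY) => XY.
      by exists Y => //; apply: (FP Y FY).1.2 => //; exact: XY.
    by exists X => //; apply: (FP X FX).1.2 => //; exact: XY.
  + by move=> y [X FX Xy] Hy; apply: (FP X FX).2.
exists C; split => //; split => // x.
apply: contrapT => nx.
apply: (Cmax (gspan C x)); last first.
  split; first exact: subg_gspan.
  exact: gspan_disj.
split; first exact: gspan_sub.
move=> h; apply: nx; have := h x (gspan_x x hC).
by move=> Cx; exists 0, x; rewrite add0r; split => //; case: hH.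
Qed.

End Exp.

Section Sym.
Variables (p : nat) (L : topologicalZmodType) (nabla : L -> dual L) (g : dual L -> L).
Hypothesis pp : prime p.
Hypothesis hexp : forall x : L, x *+ p = 0.
Hypothesis nablaK : cancel nabla g.
Hypothesis gK : cancel g nabla.
Hypothesis cnabla : continuous nabla.
Hypothesis cg : continuous g.
Hypothesis nablaD : forall x y z : L,
  dual_val (nabla (x + y)) z = addT (dual_val (nabla x) z) (dual_val (nabla y) z).
Hypothesis nablaA : forall x : L, dual_val (nabla x) x = zeroT.

Lemma charP (M : topologicalZmodType) (chi : dual M) : is_char (dual_val chi).
Proof. exact: (set_mem (valP chi)). Qed.

Lemma char0 (M : topologicalZmodType) (f : M -> T) : is_char f -> f 0 = zeroT.
Proof.
case=> _ hf; apply/esym/(@addTI (f 0)); rewrite addT0 -hf addr0 //.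
Qed.

Lemma charN (M : topologicalZmodType) (f : M -> T) x : is_char f -> f (- x) = oppT (f x).
Proof.
move=> hf; apply: addT_eq0; rewrite -hf.2 subrr; exact: char0.
Qed.

Definition om x y := dual_val (nabla x) y.

Lemma omDl x y z : om (x + y) z = addT (om x z) (om y z).
Proof. exact: nablaD. Qed.

Lemma omDr x y z : om x (y + z) = addT (om x y) (om x z).
Proof. exact: (charP (nabla x)).2. Qed.

Lemma omxx x : om x x = zeroT.
Proof. exact: nablaA. Qed.

Lemma om0r x : om x 0 = zeroT.
Proof. exact: (char0 (charP (nabla x))). Qed.

Lemma om0l x : om 0 x = zeroT.
Proof.
apply/esym/(@addTI (om 0 x)); rewrite addT0 -omDl addr0 //.
Qed.

Lemma omC x y : om y x = oppT (om x y).
Proof.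
apply: addT_eq0.
have := omxx (x + y); rewrite omDl !omDr !omxx add0T addT0 //.
Qed.

Lemma subg_zr a : subg [set y | om a y = zeroT].
Proof.
split; first exact: om0r.
move=> x y /= hx hy.
rewrite omDr hx add0T /om (charN _ (charP (nabla a))) -/(om a y) hy.
exact: oppT0.
Qed.

Lemma zl_zr a y : om y a = zeroT -> om a y = zeroT.
Proof. by move=> h; rewrite (omC y a) h oppT0. Qed.

Lemma om_surj (f : L -> T) : is_char f -> exists y, forall z, om y z = f z.
Proof.
move=> hf; exists (g (@exist {compact-open, L -> T} (fun h => h \in @chars L) f (mem_set (hf : @chars L f)))).
by move=> z; rewrite /om gK.
Qed.

Lemma om_inj y y' : (forall z, om y z = om y' z) -> y = y'.
Proof.
move=> h; rewrite -(nablaK y) -(nablaK y'); congr g.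
apply: val_inj; apply: funext => z; exact: h z.
Qed.

Definition Usm : set T := [set t | exists r : Rdefinitions.R, t = piT r /\ `|r| < (p%:R)^-1].

Lemma p_gt0 : (0 < p)%N. Proof. exact: prime_gt0. Qed.

Lemma charMn (M : topologicalZmodType) (f : M -> T) x r n :
  is_char f -> f x = piT r -> f (x *+ n) = piT (r *+ n).
Proof.
move=> hf hx; elim: n => [|n IH]; first by rewrite !mulr0n (char0 hf).
by rewrite !mulrS hf.2 hx IH piTD.
Qed.

Lemma int_small (z : Rdefinitions.R) : z \is a Num.int -> `|z| < 1 -> z = 0.
Proof.
case/intrP => m ->; rewrite -intr_norm.
have [->//|nm] := eqVneq m 0.
move=> h; exfalso; move: h; rewrite ltNge; move/negP; apply.
rewrite -[1]/(1%:~R) ler_int.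
by rewrite -gtz0_ge1 normr_gt0.
Qed.

Lemma char_small (f : L -> T) x : is_char f -> Usm (f x) -> f x = zeroT.
Proof.
move=> hf [r [hx hr]].
have := charMn p hf hx; rewrite hexp (char0 hf) /zeroT => /esym/piT_eq.
rewrite subr0 => hi.
have : r *+ p = 0.
  apply: int_small => //; rewrite normrMn -mulr_natr.
  have hp : (0 : Rdefinitions.R) < p%:R by rewrite ltr0n p_gt0.
  by rewrite -ltr_pdivlMr // mul1r.
move/eqP; rewrite mulrn_eq0 (negbTE (lt0n_neq0 p_gt0)) ?orbF ?andbT => /eqP r0.
by rewrite hx r0.
Qed.

Lemma Usm0 : Usm zeroT.
Proof. by exists 0; split => //; rewrite normr0 invr_gt0 ltr0n p_gt0. Qed.

Lemma Usm_open : open Usm.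
Proof.
rewrite /open /= /quotient_open /= openE => x /= [r [hx hr]].
change (piT x = piT r) in hx.
apply/nbhs_ballP; exists ((p%:R)^-1 - `|r|); first by rewrite /= subr_gt0.
move=> y; rewrite /ball /= => hy; change (Usm (piT y)).
exists (r + (y - x)); split.
  apply/piT_eq; move/piT_eq: hx.
  by have -> : y - (r + (y - x)) = x - r by ring.
rewrite (le_lt_trans (ler_normD _ _)) // -ltrBrDl.
by rewrite -normrN opprB.
Qed.


Definition perp (S : set L) := [set x | forall y, S y -> om x y = zeroT].

Lemma sval_cont : continuous (set_val : dual L -> {compact-open, L -> T}).
Proof. exact: initial_continuous. Qed.

Lemma perp_open K : compact K -> open (perp K).
Proof.
move=> cK.
pose S := [set h : {compact-open, L -> T} | h @` K `<=` Usm].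
have oS : open S := compact_open_open cK Usm_open.
have o1 : open (set_val @^-1` S : set (dual L)) := (continuousP _).1 sval_cont _ oS.
have o2 : open (nabla @^-1` (set_val @^-1` S)) := (continuousP _).1 cnabla _ o1.
suff -> : perp K = nabla @^-1` (set_val @^-1` S) by [].
apply/seteqP; split => x /=.
  move=> hx _ [y Ky <-]; have := hx y Ky; rewrite /om /dual_val => ->; exact: Usm0.
move=> hx y Ky; apply: char_small; first exact: charP.
exact: hx (dual_val (nabla x) y) (ex_intro2 _ _ y Ky erefl).
Qed.

Lemma perp_small O : nbhs (0 : L) O -> exists K, compact K /\ perp K `<=` O.
Proof.
move=> hO.
pose D := [set i : set L * set T | compact i.1 /\ open i.2 /\ i.2 zeroT].
pose B := fun i : set L * set T =>
  [set h : {compact-open, L -> T} | h @` i.1 `<=` i.2].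
pose F := filter_from D B.
have FF : Filter F.
  apply: filter_from_filter.
    by exists (set0, setT); split; [exact: compact0|split; [exact: openT|]].
  move=> [K1 O1] [K2 O2] [c1 h1] [c2 h2]; case: h1 => e1 z1; case: h2 => e2 z2.
  exists (K1 `|` K2, O1 `&` O2).
    by split; [exact: compactU|split; [exact: openI|]].
  move=> h /= hh; split => _ [y Ky <-].
    by have := hh (h y) (ex_intro2 _ _ y (or_introl Ky) erefl) => -[].
  by have := hh (h y) (ex_intro2 _ _ y (or_intror Ky) erefl) => -[].
have Fcvg : F --> (set_val (nabla 0) : {compact-open, L -> T}).
  apply/compact_open_cvgP => K O1 cK oO hKO.
  have [[k Kk]|nK] := pselect (exists k, K k).
    exists (K, O1); last by [].
    split => //; split => //.
    have := hKO _ (ex_intro2 _ _ k Kk erefl); rewrite -/(dual_val _ _) -/(om 0 k).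
    by rewrite om0l.
  exists (set0, setT); first by split; [exact: compact0|split; [exact: openT|]].
  move=> h _ t [y Ky _]; exfalso; apply: nK; by exists y.
have hO' : nbhs (g (nabla 0)) O by rewrite nablaK.
have := @cg (nabla 0) O hO'.
rewrite nbhsE => -[W [oW W0] WO].
case: oW => S oS SE.
have nS : nbhs (set_val (nabla 0) : {compact-open, L -> T}) S.
  apply: open_nbhs_nbhs; split => //.
  by have : W (nabla 0) := W0; rewrite -SE.
have [[K O'] [/= cK [oO' zO']] BS] := Fcvg S nS.
exists K; split => // x hx.
have : W (nabla x).
  rewrite -SE /=; apply: BS => _ [y Ky <-].
  by have := hx y Ky; rewrite /om /dual_val => ->.
by move/WO; rewrite /= nablaK.
Qed.

End Sym.

Section Sym2.
Variables (p : nat) (L : topologicalZmodType) (nabla : L -> dual L) (g : dual L -> L).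
Hypothesis pp : prime p.
Hypothesis hexp : forall x : L, x *+ p = 0.
Hypothesis nablaK : cancel nabla g.
Hypothesis gK : cancel g nabla.
Hypothesis cnabla : continuous nabla.
Hypothesis cg : continuous g.
Hypothesis nablaD : forall x y z : L,
  dual_val (nabla (x + y)) z = addT (dual_val (nabla x) z) (dual_val (nabla y) z).
Hypothesis nablaA : forall x : L, dual_val (nabla x) x = zeroT.

Local Notation om := (om nabla).
Local Notation perp := (perp nabla).

Lemma cont_subx (x : L) : continuous (fun y : L => y - x).
Proof.
move=> y; apply: (@continuous_comp _ _ _ (fun y => (y, x)) (fun z : L * L => z.1 - z.2)).
  by apply: cvg_pair; [exact: cvg_id|exact: cvg_cst].
exact: sub_continuous.
Qed.

Lemma nbhs_coset (M : set L) x : nbhs 0 M -> nbhs x [set y | M (y - x)].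
Proof.
move=> hM; have hM' : nbhs (x - x) M by rewrite subrr.
exact: (@cont_subx x x M hM').
Qed.

Lemma open_subg (M : set L) : subg M -> nbhs 0 M -> open M.
Proof.
move=> hM h0; rewrite openE => x Mx.
apply: filterS (nbhs_coset x h0) => y /= hy.
by rewrite -(subrK x y); apply: subgD.
Qed.

Lemma locconst (M : set L) (Y : topologicalType) (f : L -> Y) :
  nbhs 0 M -> (forall x m, M m -> f (x + m) = f x) -> continuous f.
Proof.
move=> h0 hf x W hW /=.
apply: filterS (nbhs_coset x h0) => y /= hy.
rewrite -(subrKC x y) hf //; exact: nbhs_singleton.
Qed.

Lemma subg_perp S : subg (perp S).
Proof.
split; first by move=> y _; exact: (om0l nablaD).
move=> x y hx hy z Sz; apply: zl_zr => //.
by apply: (subg_zr nabla z).2 => /=; apply: zl_zr => //; [exact: hx|exact: hy].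
Qed.

Definition iso (S : set L) := forall x y, S x -> S y -> om x y = zeroT.

Lemma iso_span S x : subg S -> iso S -> perp S x -> iso (gspan S x).
Proof.
move=> hS iS px.
have zx : gspan S x `<=` [set w | om x w = zeroT].
  apply: gspan_min; [exact: subg_zr|by move=> s Ss; exact: px|exact: (omxx nablaA)].
have zm m : S m -> gspan S x `<=` [set w | om m w = zeroT].
  move=> Sm; apply: gspan_min; [exact: subg_zr|by move=> s Ss; exact: iS|].
  by apply: zl_zr => //; exact: px.
move=> z w hz hw.
have : gspan S x `<=` [set w | om z w = zeroT].
  apply: gspan_min; first exact: subg_zr.
    by move=> m Sm; apply: zl_zr => //; exact: zm.
  by apply: zl_zr => //; exact: zx.
by apply.
Qed.

Lemma exists_O0 : LCA L -> exists O0 : set L, nbhs 0 O0 /\ subg O0 /\ iso O0.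
Proof.
case=> _ lc.
have [V hV [cV _]] := lc 0 I.
have nV : nbhs (0 : L) V.
  by move: hV; rewrite /within /=; apply: filterS => y; apply.
have [K [cK KV]] := perp_small nablaK cg nablaD nV.
exists (perp K `&` perp V); split.
  apply: open_nbhs_nbhs; split.
    by apply: openI; apply: perp_open => //.
  by split => y _; exact: (om0l nablaD).
split.
  split; first by split => y _; exact: (om0l nablaD).
  by move=> x y [hx1 hx2] [hy1 hy2]; split; apply: (subg_perp _).2.
move=> x y [_ hx] [hy _]; apply: hx; exact: KV.
Qed.

End Sym2.

Lemma dec3 (V : zmodType) (b m c b' m' c' : V) : b + m + c = b' + m' + c' ->
  (b - b') + (m - m') + (c - c') = 0.
Proof. by move=> e; rewrite (addrACA b) (addrACA (b + m)) -!opprD e subrr. Qed.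

Section Sym3.
Variables (p : nat) (L : topologicalZmodType) (nabla : L -> dual L) (g : dual L -> L).
Hypothesis pp : prime p.
Hypothesis hexp : forall x : L, x *+ p = 0.
Hypothesis nablaK : cancel nabla g.
Hypothesis gK : cancel g nabla.
Hypothesis cnabla : continuous nabla.
Hypothesis cg : continuous g.
Hypothesis nablaD : forall x y z : L,
  dual_val (nabla (x + y)) z = addT (dual_val (nabla x) z) (dual_val (nabla y) z).
Hypothesis nablaA : forall x : L, dual_val (nabla x) x = zeroT.

Local Notation om := (om nabla).
Local Notation perp := (perp nabla).
Local Notation iso := (iso nabla).

Lemma lagrangian : LCA L ->
  exists M, [/\ subg M, nbhs 0 M, iso M & forall x, perp M x -> M x].
Proof.
move=> hL.
have [Q0 [nQ0 [sQ0 iQ0]]] := exists_O0 pp hexp nablaK cnabla cg nablaD nablaA hL.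
pose P := fun X : set L => subg X /\ iso X /\ Q0 `<=` X.
have [||| M [[sM [iM QM]] Mmax]] := @zorn0 _ P Q0.
- exact: sQ0.1.
- by split => //; split.
- move=> F [X0 FX0] FP tot; split; [split|split].
  + by exists X0 => //; have [[]] := FP X0 FX0.
  + move=> x y [X FX Xx] [Y FY Yy].
    case: (tot X Y FX FY) => XY.
      by exists Y => //; apply: (FP Y FY).1.2 => //; exact: XY.
    by exists X => //; apply: (FP X FX).1.2 => //; exact: XY.
  + move=> x y [X FX Xx] [Y FY Yy].
    case: (tot X Y FX FY) => XY.
      by apply: (FP Y FY).2.1 => //; exact: XY.
    by apply: (FP X FX).2.1 => //; exact: XY.
  + by move=> x hx; exists X0 => //; apply: (FP X0 FX0).2.2.
exists M; split => //; first by apply: filterS QM nQ0.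
move=> x px; apply: contrapT => nMx; apply: (Mmax (gspan M x)).
  split; first exact: gspan_sub.
  by move=> h; apply: nMx; apply: h; exact: gspan_x.
split; first exact: subg_gspan.
split; first exact: iso_span.
by move=> y /QM; exact: gspan_sub.
Qed.

Lemma extend (M B : set L) (f : L -> T) :
  subg M -> nbhs 0 M -> (forall x, perp M x -> M x) ->
  subg B -> (forall y, B y -> M y -> y = 0) ->
  (forall b1 b2, B b1 -> B b2 -> f (b1 + b2) = addT (f b1) (f b2)) ->
  exists y, M y /\ forall b, B b -> om y b = f b.
Proof.
move=> sM nM pM sB dBM fD.
have sH := subg_ssum sB sM.
have [C [sC [dC hC]]] := complement pp hexp sH.
have dec : forall z, exists t : L * L * L,
    [/\ B t.1.1, M t.1.2, C t.2 & z = t.1.1 + t.1.2 + t.2].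
  move=> z; case: (hC z) => h [c [[b [m [Bb [Mm ->]]]] [Cc ->]]].
  by exists (b, m, c).
have uniq : forall b m c b' m' c', B b -> M m -> C c -> B b' -> M m' -> C c' ->
    b + m + c = b' + m' + c' -> b = b'.
  move=> b m c b' m' c' Bb Mm Cc Bb' Mm' Cc' /dec3 E.
  have cc : c - c' = 0.
    apply: dC; first exact: sC.2.
    exists (b' - b), (m' - m); split; first exact: sB.2.
    split; first exact: sM.2.
    have -> : (b' - b) + (m' - m) = - ((b - b') + (m - m')) by rewrite opprD !opprB.
    by apply/eqP; rewrite -addr_eq0 addrC E.
  move: E; rewrite cc addr0 => E.
  apply/eqP; rewrite -subr_eq0; apply/eqP; apply: dBM; first exact: sB.2.
  have -> : b - b' = m' - m by apply/eqP; rewrite -(opprB m) -addr_eq0 E.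
  exact: sM.2.
case: (choice dec) => d hd.
have f0 : f 0 = zeroT.
  have := fD 0 0 sB.1 sB.1; rewrite addr0 => h.
  by apply/esym/(@addTI (f 0)); rewrite addT0 -h.
have bproj : forall z b m c, B b -> M m -> C c -> z = b + m + c -> (d z).1.1 = b.
  move=> z b m c Bb Mm Cc ->; case: (hd (b + m + c)) => B1 M1 C1 E1.
  by apply: (uniq _ _ _ _ _ _ B1 M1 C1 Bb Mm Cc); rewrite -E1.
pose G := fun z => f (d z).1.1.
have GD : forall z w, G (z + w) = addT (G z) (G w).
  move=> z w; rewrite /G.
  case: (hd z) => Bz Mz Cz Ez; case: (hd w) => Bw Mw Cw Ew.
  rewrite (bproj (z + w) ((d z).1.1 + (d w).1.1) ((d z).1.2 + (d w).1.2)
     ((d z).2 + (d w).2)); first exact: fD.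
  - exact: subgD.
  - exact: subgD.
  - exact: subgD.
  by rewrite {1}Ez {1}Ew addrACA (addrACA (d z).1.1).
have GM : forall x m, M m -> G (x + m) = G x.
  move=> x m Mm; rewrite /G; case: (hd x) => Bx Mx Cx Ex.
  rewrite (bproj (x + m) (d x).1.1 ((d x).1.2 + m) (d x).2) //; first exact: subgD.
  by rewrite {1}Ex addrAC addrA.
have Gc : is_char G.
  split => //; exact: (locconst nM GM).
have [y hy] := om_surj gK Gc.
have G0 : forall b, B b -> G b = f b.
  move=> b Bb; rewrite /G (bproj b b 0 0) //; [exact: sM.1|exact: sC.1|].
  by rewrite !addr0.
exists y; split; last by move=> b Bb; rewrite hy G0.
apply: pM => m Mm; rewrite hy /G (bproj m 0 m 0) //; [exact: sB.1|exact: sC.1|].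
by rewrite add0r addr0.
Qed.


Lemma iso_compl (M : set L) : subg M -> nbhs 0 M -> iso M -> (forall x, perp M x -> M x) ->
  exists B, [/\ subg B, iso B, (forall y, B y -> M y -> y = 0) & forall x, ssum B M x].
Proof.
move=> sM nM iM pM.
pose P := fun X : set L => subg X /\ iso X /\ (forall y, X y -> M y -> y = 0).
have [||| B [[sB [iB dB]] Bmax]] := @zorn0 _ P [set 0].
- done.
- split; first split => //; first by move=> x y -> ->; rewrite subr0.
  split; last by move=> y ->.
  by move=> x y -> _; exact: (om0l nablaD).
- move=> F [X0 FX0] FP tot; split; [split|split].
  + by exists X0 => //; have [[]] := FP X0 FX0.
  + move=> x y [X FX Xx] [Y FY Yy].
    case: (tot X Y FX FY) => XY.
      by exists Y => //; apply: (FP Y FY).1.2 => //; exact: XY.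
    by exists X => //; apply: (FP X FX).1.2 => //; exact: XY.
  + move=> x y [X FX Xx] [Y FY Yy].
    case: (tot X Y FX FY) => XY.
      by apply: (FP Y FY).2.1 => //; exact: XY.
    by apply: (FP X FX).2.1 => //; exact: XY.
  + by move=> y [X FX Xy] My; apply: (FP X FX).2.2.
exists B; split => // x; apply: contrapT => nx.
have fD : forall b1 b2, B b1 -> B b2 ->
    oppT (om x (b1 + b2)) = addT (oppT (om x b1)) (oppT (om x b2)).
  by move=> b1 b2 _ _; rewrite omDr oppTD.
have [y [My hy]] := extend sM nM pM sB dB fD.
have px' : perp B (x + y).
  by move=> b Bb; rewrite (omDl nablaD) hy // addTN.
have nx' : ~ ssum M B (x + y).
  case=> m [b [Mm [Bb E]]]; apply: nx; exists b, (m - y); split => //.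
  split; first exact: sM.2.
  have -> : x = (x + y) - y by rewrite addrK.
  by rewrite E (addrC m) addrA.
apply: (Bmax (gspan B (x + y))).
  split; first exact: gspan_sub.
  move=> h; apply: nx'; exists 0, (x + y); split; first exact: sM.1.
  by split; [apply: h; exact: gspan_x|rewrite add0r].
split; first exact: subg_gspan.
split; first exact: iso_span.
Show. apply: (gspan_disj pp hexp sB sM dB nx').
Qed.

End Sym3.

Record subgrp (V : zmodType) := Subgrp { sset : set V; sprf : subg sset }.

Section SubDisc.
Variables (V : zmodType) (S : subgrp V).
Local Notation B := (sset S).
Let sB := sprf S.

Definition Bsub := set_type B.
HB.instance Definition _ := Choice.copy Bsub (set_type B).

Definition bzero : Bsub := @exist V (fun x => x \in B) 0 (mem_set sB.1).
Definition bopp (a : Bsub) : Bsub :=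
  @exist V (fun x => x \in B) (- sval a) (mem_set (subgN sB (set_mem (valP a)))).
Definition badd (a b : Bsub) : Bsub :=
  @exist V (fun x => x \in B) (sval a + sval b)
    (mem_set (subgD sB (set_mem (valP a)) (set_mem (valP b)))).

Lemma baddA : associative badd.
Proof. by move=> a b c; apply: val_inj; rewrite /= addrA. Qed.
Lemma baddC : commutative badd.
Proof. by move=> a b; apply: val_inj; rewrite /= addrC. Qed.
Lemma badd0 : left_id bzero badd.
Proof. by move=> a; apply: val_inj; rewrite /= add0r. Qed.
Lemma baddN : left_inverse bzero bopp badd.
Proof. by move=> a; apply: val_inj; rewrite /= addNr. Qed.

HB.instance Definition _ := GRing.isZmodule.Build Bsub baddA baddC badd0 baddN.

Local Notation Ad := (discrete_topology Bsub).
HB.instance Definition _ := GRing.Zmodule.copy Ad Bsub.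

Lemma Ad_nbhs (a : Ad) : nbhs a [set a].
Proof. by rewrite nbhs_principalE. Qed.

Lemma Ad_cont (Y : topologicalType) (f : Ad -> Y) : continuous f.
Proof.
move=> a W hW; rewrite /= nbhs_principalE => _ ->; exact: (nbhs_singleton hW).
Qed.

Lemma Ad2_cont (Y : topologicalType) (f : Ad * Ad -> Y) : continuous f.
Proof.
move=> [a b] W hW /=.
exists ([set a], [set b]); first by split; apply: Ad_nbhs.
by move=> [x y] [/= -> ->]; apply: nbhs_singleton.
Qed.

HB.instance Definition _ := PreTopologicalNmodule_isTopologicalZmodule.Build Ad
  (@Ad2_cont _ (fun x : Ad * Ad => x.1 - x.2)).

End SubDisc.

Lemma Ad_LCA (V : zmodType) (S : subgrp V) : LCA (discrete_topology (Bsub S)).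
Proof.
split.
  move=> a b; rewrite /cluster /meets /= => clu.
  by have [x [/= -> ->]] := clu [set a] [set b] (discrete_set1 a) (discrete_set1 b).
move=> x _; exists [set x].
  by rewrite /within /= nbhs_principalE => y -> .
split; [exact: compact_set1|exact: discrete_closed].
Qed.

Section Dmap.
Variables (X Y : topologicalZmodType) (h : X -> Y).
Hypothesis hc : continuous h.
Hypothesis ha : forall a b, h (a + b) = h a + h b.

Lemma dmap_char (chi : dual Y) : is_char (dual_val chi \o h).
Proof.
split.
  move=> x; apply: continuous_comp; [exact: hc|exact: (charP chi).1].
by move=> a b /=; rewrite ha (charP chi).2.
Qed.

Definition dmap (chi : dual Y) : dual X :=
  @exist {compact-open, X -> T} (fun f => f \in @chars X) (dual_val chi \o h)
    (mem_set (dmap_char chi : @chars X _)).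

Lemma dmapE chi x : dual_val (dmap chi) x = dual_val chi (h x).
Proof. by []. Qed.

Lemma dmap_cont : continuous dmap.
Proof.
apply: (@continuous_comp_initial _ _ _ (@set_val _ (@chars X)) dmap).
move=> chi.
have FF : Filter ((set_val \o dmap) @ chi) by apply: fmap_filter; exact: nbhs_filter.
apply/(compact_open_cvgP _ FF) => K O cK oO hKO.
have cK' : compact (h @` K) by apply: continuous_compact => //; exact: continuous_subspaceT.
pose S := [set f : {compact-open, Y -> T} | f @` (h @` K) `<=` O].
have oS : open S := compact_open_open cK' oO.
have Schi : S (set_val chi).
  move=> _ [_ [k Kk <-] <-]; apply: hKO; by exists k.
have nS : nbhs chi (set_val @^-1` S : set (dual Y)).
  have := @initial_continuous _ _ (@set_val _ (@chars Y)) chi S.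
  apply; exact: open_nbhs_nbhs.
apply: filterS nS => c Sc _ [k Kk <-].
by apply: Sc; exists (h k) => //; exists k.
Qed.

End Dmap.


Lemma contB (X : topologicalType) (Y : topologicalZmodType) (f h : X -> Y) :
  continuous f -> continuous h -> continuous (fun x => f x - h x).
Proof.
move=> cf ch x.
apply: (@continuous_comp _ _ _ (fun x => (f x, h x)) (fun z : Y * Y => z.1 - z.2)).
  by apply: cvg_pair; [exact: cf|exact: ch].
exact: sub_continuous.
Qed.

Lemma contD (X : topologicalType) (Y : topologicalZmodType) (f h : X -> Y) :
  continuous f -> continuous h -> continuous (fun x => f x + h x).
Proof.
move=> cf ch x.
apply: (@continuous_comp _ _ _ (fun x => (f x, h x)) (fun z : Y * Y => z.1 + z.2)).
  by apply: cvg_pair; [exact: cf|exact: ch].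
exact: add_continuous.
Qed.

Theorem theorem4p5 (p : nat) (L : topologicalZmodType) (nabla : L -> dual L) :
  prime p ->
  LCA L ->
  (forall x : L, x != 0 ->
     x *+ p = 0 /\ (forall k : nat, (0 < k < p)%N -> x *+ k != 0)) ->
  symplectic_self_duality nabla ->
  is_standard nabla.
Proof.
move=> pp hL hexp0 [[cnabla [g [nablaK gK cg]]] nablaD nablaA].
have hexp : forall x : L, x *+ p = 0.
  by move=> x; have [->|nx] := eqVneq x 0; [rewrite mul0rn|exact: (hexp0 x nx).1].
have [M [sM nM iM pM]] := lagrangian pp hexp nablaK cnabla cg nablaD nablaA hL.
have [B [sB iB dBM sBM]] := iso_compl pp hexp gK nablaD nablaA sM nM iM pM.
pose S := Subgrp sB.
pose A := discrete_topology (Bsub S).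
have dec : forall z, exists t : L * L, B t.1 /\ M t.2 /\ z = t.1 + t.2.
  by move=> z; case: (sBM z) => b [m [Bb [Mm ->]]]; exists (b, m).
case: (choice dec) => d hd.
have uniq : forall b m b' m', B b -> M m -> B b' -> M m' -> b + m = b' + m' -> b = b'.
  move=> b m b' m' Bb Mm Bb' Mm' E.
  apply/eqP; rewrite -subr_eq0; apply/eqP; apply: dBM; first exact: sB.2.
  have -> : b - b' = m' - m.
    by rewrite -[b](addrK m) E addrC addrA addKr.
  exact: sM.2.
pose pB (z : L) : A := @exist L (fun x => x \in B) (d z).1 (mem_set (hd z).1).
have valpB : forall z, val (pB z) = (d z).1 by [].
have pBv : forall z b m, B b -> M m -> z = b + m -> val (pB z) = b.
  move=> z b m Bb Mm ->; rewrite valpB; case: (hd (b + m)) => B1 [M1 E1].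
  by apply: (uniq _ _ _ _ B1 M1 Bb Mm); rewrite -E1.
have valD : forall a b : A, val (a + b) = val a + val b by [].
have pB_val : forall a : A, pB (val a) = a.
  move=> a; apply: val_inj; apply: (pBv _ _ 0 (set_mem (valP a)) sM.1).
  by rewrite addr0.
have pBM : forall z m, M m -> pB (z + m) = pB z.
  move=> z m Mm; apply: val_inj; case: (hd z) => Bz [Mz Ez].
  apply: (pBv _ _ ((d z).2 + m) Bz); first exact: subgD.
  by rewrite {1}Ez addrA.
have pBD : forall z w, pB (z + w) = pB z + pB w.
  move=> z w; apply: val_inj; rewrite valD.
  case: (hd z) => Bz [Mz Ez]; case: (hd w) => Bw [Mw Ew].
  apply: (pBv _ _ ((d z).2 + (d w).2)); [exact: subgD|exact: subgD|].
  by rewrite {1}Ez {1}Ew addrACA.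
have pB0 : pB 0 = 0 by rewrite -(pB_val 0).
have pBc : continuous pB := locconst nM pBM.
have valc : continuous (val : A -> L) by move=> a; exact: Ad_cont.
clearbody pB.
pose E := dmap pBc pBD.
pose R := dmap valc valD.
have omgE : forall chi z, om nabla (g (E chi)) z = dual_val chi (pB z).
  by move=> chi z; rewrite /om gK dmapE.
have gEM : forall chi, M (g (E chi)).
  move=> chi; apply: pM => m Mm; rewrite omgE -(add0r m) pBM // pB0.
  exact: (char0 (charP chi)).
have zM : forall z, M (z - val (pB z)).
  move=> z; case: (hd z) => Bz [Mz Ez].
  by rewrite valpB {1}Ez (addrC (d z).1) addrK.
pose phi := fun u : A * dual A => val u.1 + g (E u.2).
pose psi := fun z : L => (pB z, R (nabla (z - val (pB z)))).
exists A, phi; split.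
- exact: Ad_LCA.
- split.
    move=> u; apply: contD.
      by move=> v; apply: continuous_comp; [exact: cvg_fst|exact: valc].
    move=> v; apply: (@continuous_comp _ _ _ (fun u : A * dual A => u.2)
                          (fun chi => g (E chi))); first exact: cvg_snd.
    apply: (@continuous_comp _ _ _ E g); [exact: dmap_cont|exact: cg].
  exists psi; split.
  + move=> [a chi]; rewrite /psi /phi /=.
    have e1 : pB (val a + g (E chi)) = a by rewrite pBM // pB_val.
    rewrite e1; congr pair.
    rewrite (addrC (val a)) addrK.
    apply: val_inj; apply: funext => a'.
    change (dual_val (R (nabla (g (E chi)))) a' = dual_val chi a').
    by rewrite dmapE gK dmapE pB_val.
  + move=> z; rewrite /phi /psi /=.
    have h : E (R (nabla (z - val (pB z)))) = nabla (z - val (pB z)).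
      apply: val_inj; apply: funext => w.
      change (dual_val (E (R (nabla (z - val (pB z))))) w =
              om nabla (z - val (pB z)) w).
      rewrite dmapE dmapE -/(om nabla _ _).
      by rewrite -{2}(subrK (val (pB w)) w) omDr (iM _ (w - val (pB w))) // add0T.
    by rewrite h nablaK addrC subrK.
  + move=> z; rewrite /psi; apply: (@cvg_pair _ _ _ (nbhs z) (nbhs (pB z)) (nbhs (R (nabla (z - val (pB z)))))); first exact: pBc.
    apply: continuous_comp; last exact: dmap_cont.
    apply: continuous_comp; last exact: cnabla.
    apply: contB; first by move=> ?; exact: cvg_id.
    by move=> y; apply: continuous_comp; [exact: pBc|exact: valc].
- move=> [a chi] [b chi'] [c chi''] /= e1 e2.
  have e3 : g (E chi'') = g (E chi) + g (E chi').
    apply: (om_inj nablaK) => z.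
    by rewrite (omDl nablaD) !omgE e2.
  by rewrite /phi /= e1 valD e3 addrACA.
- move=> [a chi] [b chi'] /=; rewrite /std_nabla /= /phi /=.
  change (om nabla (val a + g (E chi)) (val b + g (E chi')) =
          subT (dual_val chi b) (dual_val chi' a)).
  rewrite (omDl nablaD) !omDr.
  rewrite (iB (val a) (val b) (set_mem (valP a)) (set_mem (valP b))).
  rewrite (iM (g (E chi)) (g (E chi'))) //.
  rewrite (omC nablaD nablaA (g (E chi')) (val a)) !omgE !pB_val.
  by rewrite add0T addT0 addTC.
Qed.
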